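(* Let $\mu>0$, $p\in(0,1)$, $\lambda>0$, and consider the one-dimensional $\lambda$-biased random walk on dynamical percolation $(X_t,\eta_t)_{t\ge0}$ on $\mathbb{Z}$. Then its environment process $(\xi_t)_{t\ge0}$, with state space $\{0,1\}^{E(\mathbb{Z})}$ equipped with the topology induced by the metric $d$ below, is a Feller process.
   Context: One-dimensional $\lambda$-RWDP: edges of $\mathbb{Z}$ have states $\eta_t(e)\in\{0,1\}$ ($1$ = open), initially i.i.d. Bernoulli$(p)$, each resampled as an independent Bernoulli$(p)$ at the rings of its own rate-$\mu$ Poisson clock. The walker starts at $X_0=0$, has a rate-$1$ Poisson clock and at each ring at position $x$ attempts to move to $x+1$ with probability $e^\lambda/(e^\lambda+e^{-\lambda})$ and to $x-1$ otherwise, succeeding iff the corresponding edge is open. Environment process: $\xi_t(\{x,x+1\})=\eta_t(\{X_t+x,X_t+x+1\})$ for all $x\in\mathbb{Z}$ (the environment seen from the walker). Label edges relative to the origin by $e_i=\{i-1,i\}$ for $i\ge1$ and $e_i=\{i,i+1\}$ for $i\le-1$. For $a,b\in\{0,1\}^{E(\mathbb{Z})}$ let $r(a,b)=\min\{n: a(e_n)\ne b(e_n)\text{ or }a(e_{-n})\ne b(e_{-n})\}$ and $d(a,b)=1/(1+r(a,b))$. *)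

(* Defs.v *)
From HB Require Import structures.
From mathcomp Require Import all_boot all_order all_algebra.
From mathcomp Require Import all_classical all_reals all_analysis.
Set Implicit Arguments. Unset Strict Implicit. Unset Printing Implicit Defensive.
Import Order.TTheory GRing.Theory Num.Theory numFieldNormedType.Exports.
Local Open Scope classical_set_scope.
Local Open Scope ring_scope.

(* Edges of Z.  The edge {x, x+1} is indexed by the integer x.        *)
(* A configuration in {0,1}^{E(Z)} is a map int -> bool (true = open). *)
Definition config := int -> bool.

(* Paper's labelling relative to the origin:
     e_n = {n-1, n}   (n >= 1)  -> index n-1
     e_{-n} = {-n, -n+1} (n >= 1) -> index -n                          *)
Definition edge_pos (n : nat) : int := (n%:Z - 1)%R.
Definition edge_neg (n : nat) : int := (- n%:Z)%R.

Definition differ_at (a b : config) (n : nat) : Prop :=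
  (0 < n)%N /\ (a (edge_pos n) != b (edge_pos n) \/ a (edge_neg n) != b (edge_neg n)).

Definition r_dist (a b : config) : nat :=
  xget 0%N [set n | differ_at a b n /\ (forall m, (m < n)%N -> ~ differ_at a b m)].

(* d(a,b) = 1/(1 + r(a,b)), with r = +infinity (so d = 0) when a = b *)
Definition d_metric {R : realType} (a b : config) : R :=
  if pselect (a = b) then 0 else 1 / (1 + (r_dist a b)%:R).

Definition d_continuous {R : realType} (f : config -> R) : Prop :=
  forall a (eps : R), 0 < eps -> exists2 delta : R, 0 < delta &
    forall b, d_metric a b < delta -> `|f b - f a| < eps.

(* Random ingredients (all mutually independent):                      *)
(*  EdgeTime x k : k-th inter-ring time of the rate-mu clock of edge x *)
(*  EdgeMark x k : Bernoulli(p) value (1 = open) drawn at that ring    *)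
(*  WalkTime k   : k-th inter-ring time of the walker's rate-1 clock   *)
(*  WalkDir k    : 1 (attempt right) w.p. e^l/(e^l+e^-l), else 0       *)
Inductive clock_index :=
| EdgeTime of int & nat
| EdgeMark of int & nat
| WalkTime of nat
| WalkDir of nat.

Definition ci_enc (i : clock_index) : ((int * nat) + (int * nat)) + (nat + nat) :=
  match i with
  | EdgeTime x k => inl (inl (x, k))
  | EdgeMark x k => inl (inr (x, k))
  | WalkTime k => inr (inl k)
  | WalkDir k => inr (inr k)
  end.
Definition ci_dec (c : ((int * nat) + (int * nat)) + (nat + nat)) : clock_index :=
  match c with
  | inl (inl (x, k)) => EdgeTime x k
  | inl (inr (x, k)) => EdgeMark x k
  | inr (inl k) => WalkTime k
  | inr (inr k) => WalkDir k
  end.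
Lemma ci_encK : cancel ci_enc ci_dec. Proof. by case. Qed.
HB.instance Definition _ := Equality.copy clock_index (can_type ci_encK).

Section Construction.
Variable R : realType.

Definition exp_cdf (rate s : R) : R := if s < 0 then 0 else 1 - expR (- (rate * s)).
Definition bern_cdf (q s : R) : R := if s < 0 then 0 else if s < 1 then 1 - q else 1.

Definition right_prob (lam : R) : R := expR lam / (expR lam + expR (- lam)).

Definition clock_cdf (mu p lam : R) (i : clock_index) (s : R) : R :=
  match i with
  | EdgeTime _ _ => exp_cdf mu s
  | EdgeMark _ _ => bern_cdf p s
  | WalkTime _ => exp_cdf 1 s
  | WalkDir _ => bern_cdf (right_prob lam) s
  end.

(* mutual independence + marginal laws, via joint distribution functions
   of every finite subfamily *)
Definition rwdp_clocks {dT} {T : measurableType dT} (P : probability T R)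
    (mu p lam : R) (Y : clock_index -> {RV P >-> R}) : Prop :=
  forall (s : seq clock_index) (c : clock_index -> R), uniq s ->
    P (\big[setI/setT]_(i <- s) [set w | Y i w <= c i]) =
    ((\prod_(i <- s) clock_cdf mu p lam i (c i))%R)%:E.

(* given ring times S 0 < S 1 < ..., the number of rings in [0,t] *)
Definition nrings (S : nat -> R) (t : R) : nat :=
  xget 0%N [set k | (forall j, (j < k)%N -> S j <= t) /\ t < S k].

Definition sample := clock_index -> R.

Definition edge_ring (om : sample) (x : int) (k : nat) : R :=
  \sum_(j < k.+1) om (EdgeTime x j).
Definition walk_ring (om : sample) (k : nat) : R :=
  \sum_(j < k.+1) om (WalkTime j).

Definition eta (om : sample) (eta0 : config) (t : R) : config := fun x =>
  match nrings (edge_ring om x) t with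
  | 0%N => eta0 x
  | k.+1 => om (EdgeMark x k) == 1
  end.

Fixpoint walk_pos (om : sample) (eta0 : config) (k : nat) : int :=
  match k with
  | 0%N => 0
  | k.+1 =>
    let x := walk_pos om eta0 k in
    let env := eta om eta0 (walk_ring om k) in
    if om (WalkDir k) == 1 then (if env x then x + 1 else x)
    else (if env (x - 1) then x - 1 else x)
  end%R.

Definition walker (om : sample) (eta0 : config) (t : R) : int :=
  walk_pos om eta0 (nrings (walk_ring om) t).

(* environment seen from the walker: xi_t({x,x+1}) = eta_t({X_t+x, X_t+x+1});
   since X_0 = 0, the initial environment xi_0 equals eta_0. *)
Definition env_process (om : sample) (xi0 : config) (t : R) : config :=
  fun x => eta om xi0 t (walker om xi0 t + x)%R.

Definition env_semigroup {dT} {T : measurableType dT} (P : probability T R)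
    (Y : clock_index -> {RV P >-> R}) (t : R) (f : config -> R) (xi : config) : R :=
  fine (\int[P]_w (f (env_process (fun i => Y i w) xi t))%:E).

(* Feller property (Liggett): T_t maps C(X) into C(X) and T_t f -> f pointwise as t -> 0+ *)
Definition feller {dT} {T : measurableType dT} (P : probability T R)
    (Y : clock_index -> {RV P >-> R}) : Prop :=
  forall f : config -> R, d_continuous f ->
    (forall t : R, 0 <= t -> d_continuous (env_semigroup Y t f)) /\
    (forall xi : config, (fun t => env_semigroup Y t f xi) @ (0:R)^'+ --> f xi).

End Construction.

Arguments rwdp_clocks {R dT T} P mu p lam Y.
Arguments env_semigroup {R dT T P} Y t f xi.
Arguments feller {R dT T P} Y.

(* Main.v *)
Require Import Defs.
From HB Require Import structures.
From mathcomp Require Import all_boot all_order all_algebra.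
From mathcomp Require Import all_classical all_reals all_analysis.
From mathcomp Require Import zify measurable_realfun ring lra.
Import Order.TTheory GRing.Theory Num.Theory numFieldNormedType.Exports.
Local Open Scope classical_set_scope.
Local Open Scope ring_scope.

Set Implicit Arguments. Unset Strict Implicit. Unset Printing Implicit Defensive.

Definition agree (M : nat) (a b : config) :=
  forall x : int, - (M%:Z) <= x -> x < M%:Z -> a x = b x.

Lemma agree_sym M a b : agree M a b -> agree M b a.
Proof. by move=> h x h1 h2; rewrite h. Qed.
Lemma agree_trans M a b c : agree M a b -> agree M b c -> agree M a c.
Proof. by move=> h h' x h1 h2; rewrite h // h'. Qed.
Lemma agree_mono k M a b : (k <= M)%N -> agree M a b -> agree k a b.
Proof. by move=> kM h x h1 h2; apply: h; lia. Qed.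
Lemma agree_refl M a : agree M a a.
Proof. by []. Qed.

Definition lvl (x : int) : nat := match x with Posz n => n.+1 | Negz n => n.+1 end.

Lemma lvl_edge x : x = edge_pos (lvl x) \/ x = edge_neg (lvl x).
Proof.
case: x => n /=; [left|right]; rewrite /edge_pos /edge_neg.
  by rewrite -addn1 PoszD addrK.
by rewrite NegzE.
Qed.

Lemma lvl_window x M : - (M%:Z) <= x -> x < M%:Z -> (lvl x <= M)%N.
Proof. case: x => n /=; rewrite ?NegzE => h1 h2; lia. Qed.

Lemma lvl_in x : - ((lvl x)%:Z) <= x /\ x < (lvl x)%:Z.
Proof. case: x => n /=; rewrite ?NegzE; split; lia. Qed.

Lemma lvl_gt0 x : (0 < lvl x)%N.
Proof. by case: x. Qed.

Lemma edge_window n M : (0 < n)%N -> (n <= M)%N ->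
  (- (M%:Z) <= edge_pos n /\ edge_pos n < M%:Z) /\
  (- (M%:Z) <= edge_neg n /\ edge_neg n < M%:Z).
Proof. rewrite /edge_pos /edge_neg => h1 h2; split; split; lia. Qed.

Lemma ex_min (Q : nat -> Prop) : (exists n, Q n) ->
  exists n, Q n /\ forall m, (m < n)%N -> ~ Q m.
Proof.
move=> [n Qn]; apply: contrapT => H.
suff : forall k m, (m <= k)%N -> ~ Q m by move/(_ n n (leqnn n)).
elim=> [|k IH] m.
  rewrite leqn0 => /eqP -> Q0; apply: H; exists 0%N; split => // m'.
rewrite leq_eqVlt => /orP[/eqP -> Qk|]; last by apply: IH.
apply: H; exists k.+1; split => // m' lm; apply: IH; by rewrite -ltnS.
Qed.

Lemma r_dist_spec a b : a <> b ->
  differ_at a b (r_dist a b) /\ forall m, (m < r_dist a b)%N -> ~ differ_at a b m.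
Proof.
move=> ab.
have [x hx] : exists x, a x <> b x.
  apply: contrapT => H; apply: ab; apply/funext => x.
  by apply: contrapT => h; apply: H; exists x.
have ex : exists n, differ_at a b n.
  exists (lvl x); split; first exact: lvl_gt0.
  by case: (lvl_edge x) => <-; [left|right]; apply/eqP.
have [n [Hn Hmin]] := ex_min ex.
rewrite /r_dist; apply: (xgetPex 0%N (P := [set n | differ_at a b n /\ (forall m, (m < n)%N -> ~ differ_at a b m)])); by exists n.
Qed.

Lemma d_agree {R : realType} M a b : agree M a b -> d_metric a b < ((M.+1)%:R : R)^-1.
Proof.
move=> h; rewrite /d_metric; case: (pselect (a = b)) => [e|ab]; first by rewrite invr_gt0 ltr0n.
have [[r0 hd] hmin] := r_dist_spec ab.
have Mr : (M < r_dist a b)%N.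
  rewrite ltnNge; apply/negP => rM.
  have [[e1 e2] [e3 e4]] := edge_window r0 rM.
  by case: hd => /eqP; apply; apply: h.
rewrite div1r nat1r ltf_pV2 ?posrE ?ltr0n // ltr_nat; lia.
Qed.

Lemma agree_d {R : realType} M a b : d_metric a b < ((M.+1)%:R : R)^-1 -> agree M a b.
Proof.
rewrite /d_metric; case: (pselect (a = b)) => [e|ab] h; first by rewrite e; exact: agree_refl.
have [[r0 hd] hmin] := r_dist_spec ab.
move: h; rewrite div1r nat1r ltf_pV2 ?posrE ?ltr0n // ltr_nat => Mr.
move=> x h1 h2.
have lx := lvl_window h1 h2.
have : ~ differ_at a b (lvl x) by apply: hmin; lia.
move=> nd; apply: contrapT => axb; apply: nd; split; first exact: lvl_gt0.
by case: (lvl_edge x) => <-; [left|right]; apply/eqP.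
Qed.

Lemma delta_nat {R : realType} (delta : R) : 0 < delta ->
  exists M : nat, ((M.+1)%:R : R)^-1 < delta.
Proof.
move=> d0; exists (Num.truncn delta^-1).
rewrite invf_plt ?posrE ?ltr0n //.
have h0 : 0 <= delta^-1 by rewrite invr_ge0 ltW.
by case/andP: (truncn_itv h0).
Qed.

Definition Inf (Q : nat -> Prop) := forall N0, exists2 N, (N0 <= N)%N & Q N.

Lemma Inf_split (Q : nat -> Prop) (g : nat -> bool) : Inf Q ->
  exists b, Inf (fun N => Q N /\ g N = b).
Proof.
move=> HQ.
case: (pselect (Inf (fun N => Q N /\ g N = true))) => [H|/existsNP[N1 HN1]].
  by exists true.
case: (pselect (Inf (fun N => Q N /\ g N = false))) => [H|/existsNP[N2 HN2]].
  by exists false.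
move: HN1 HN2 => /= HN1 HN2.
have [N hN QN] := HQ (maxn N1 N2).
case E : (g N).
  by exfalso; apply: HN1; exists N => //; apply: leq_trans hN; exact: leq_maxl.
by exfalso; apply: HN2; exists N => //; apply: leq_trans hN; exact: leq_maxr.
Qed.

Lemma cluster (c : nat -> config) : exists cinf, forall M, Inf (fun N => agree M (c N) cinf).
Proof.
have step : forall pu : nat * config, exists u', agree pu.1 u' pu.2 /\
    (Inf (fun N => agree pu.1 (c N) pu.2) -> Inf (fun N => agree pu.1.+1 (c N) u')).
  move=> [M u] /=.
  case: (pselect (Inf (fun N => agree M (c N) u))) => HI; last first.
    by exists u; split => //; exact: agree_refl.
  have [b1 H1] := Inf_split (fun N => c N (M%:Z)) HI.
  have [b2 H2] := Inf_split (fun N => c N (Negz M)) H1.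
  exists (fun x => if x == M%:Z then b1 else if x == Negz M then b2 else u x).
  split.
    move=> x h1 h2.
    have -> : (x == M%:Z) = false by apply/eqP => e; subst x; lia.
    have -> : (x == Negz M) = false by apply/eqP => e; subst x; rewrite NegzE in h1; lia.
    by [].
  move=> _ N0; have [N hN [[hA e1] e2]] := H2 N0; exists N => // x h1 h2.
  case: eqP => [->//|ne1]; case: eqP => [->//|ne2].
  apply: hA.
    by case: x h1 h2 ne1 ne2 => n; rewrite ?NegzE => *; lia.
  by case: x h1 h2 ne1 ne2 => n; rewrite ?NegzE => *; lia.
have [st Hst] := choice step.
pose u := nat_rec (fun _ => config) (fun _ => false) (fun n un => st (n, un)).
have uS n : u n.+1 = st (n, u n) by [].
have InfU M : Inf (fun N => agree M (c N) (u M)).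
  elim: M => [|M IH].
    by move=> N0; exists N0 => // x h1 h2; lia.
  by rewrite uS; apply: (Hst (M, u M)).2.
have cons j k : (k <= j)%N -> agree k (u j) (u k).
  elim: j => [|j IH]; first by rewrite leqn0 => /eqP ->; exact: agree_refl.
  rewrite leq_eqVlt => /orP[/eqP ->|]; first exact: agree_refl.
  rewrite ltnS => kj; apply: agree_trans (IH kj).
  apply: agree_mono kj _; rewrite uS; exact: (Hst (j, u j)).1.
exists (fun x => u (lvl x) x) => M N0.
have [N hN hA] := InfU M N0; exists N => // x h1 h2.
rewrite hA //.
have lx := lvl_window h1 h2.
have [l1 l2] := lvl_in x.
by apply: (cons M (lvl x) lx).
Qed.

Lemma unif_cont {R : realType} (f : config -> R) : d_continuous f ->
  forall eps : R, 0 < eps -> exists M, forall a b, agree M a b -> `|f a - f b| < eps.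
Proof.
move=> fc eps e0; apply: contrapT => /forallNP H.
have H' : forall M, exists ab : config * config, agree M ab.1 ab.2 /\ eps <= `|f ab.1 - f ab.2|.
  move=> M; have /existsNP[a /existsNP[b /not_implyP[hab hf]]] := H M.
  by exists (a, b); split => //; rewrite leNgt; apply/negP.
have [s Hs] := choice H'.
have [c Hc] := cluster (fun N => (s N).1).
have [delta d0 hd] := fc c (eps / 2) (divr_gt0 e0 (ltr0Sn _ 1)).
have [K hK] := delta_nat d0.
have [N hN hA] := Hc K K.
have [hab hf] := Hs N.
have h1 : `|f (s N).1 - f c| < eps / 2.
  apply: hd; apply: lt_le_trans (d_agree (agree_sym hA)) (ltW hK).
have h2 : `|f (s N).2 - f c| < eps / 2.
  apply: hd; apply: lt_le_trans (d_agree _) (ltW hK).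
  apply: agree_sym; apply: agree_trans (agree_sym (agree_mono hN hab)) hA.
move: hf; rewrite leNgt => /negP; apply.
rewrite (splitr eps); apply: le_lt_trans (ltrD h1 h2).
rewrite (_ : f (s N).1 - f (s N).2 = (f (s N).1 - f c) - (f (s N).2 - f c)); last by rewrite opprB addrA subrK.
by rewrite (le_trans (ler_normB _ _)).
Qed.

Lemma bounded_cont {R : realType} (f : config -> R) : d_continuous f ->
  exists B : R, 0 <= B /\ forall a, `|f a| <= B.
Proof.
move=> fc; apply: contrapT => /forallNP H.
have H' : forall N : nat, exists a, (N%:R : R) < `|f a|.
  move=> N; have /not_andP[|] := H (N%:R); first by rewrite ler0n.
  move=> /existsNP[a ha]; exists a; by rewrite ltNge; apply/negP.
have [s Hs] := choice H'.
have [c Hc] := cluster s.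
have [delta d0 hd] := fc c 1 ltr01.
have [K hK] := delta_nat d0.
have h0 : 0 <= `|f c| + 1 by rewrite addr_ge0.
have [N hN hA] := Hc K (Num.truncn (`|f c| + 1)).+1.
have h1 : `|f (s N) - f c| < 1.
  by apply: hd; apply: lt_le_trans (d_agree (agree_sym hA)) (ltW hK).
have h2 : `|f (s N)| < `|f c| + 1.
  rewrite -(subrK (f c) (f (s N))) addrC.
  by apply: le_lt_trans (ler_normD _ _) _; rewrite ltrD2l.
have := Hs N.
have /andP[_ ht] := truncn_itv h0.
have : `|f c| + 1 < N%:R by apply: lt_le_trans ht _; rewrite ler_nat.
move=> a b; have := lt_trans h2 (lt_trans a b); by rewrite ltxx.
Qed.

Section Dyn.
Variable R : realType.
Implicit Types (S : nat -> R) (t : R) (om : sample R) (a b : config).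

Definition rcond S t k := (forall j, (j < k)%N -> S j <= t) /\ t < S k.

Lemma rcond_uniq S t k k' : rcond S t k -> rcond S t k' -> k = k'.
Proof.
move=> [h1 h2] [h1' h2']; apply/eqP; rewrite eqn_leq; apply/andP; split;
  rewrite leqNgt; apply/negP => lt.
  by have := h1 _ lt; rewrite leNgt h2'.
by have := h1' _ lt; rewrite leNgt h2.
Qed.

Lemma nrings_cond S t k : rcond S t k -> nrings S t = k.
Proof.
move=> hk; rewrite /nrings.
have := xgetPex 0%N (P := [set k | (forall j, (j < k)%N -> S j <= t) /\ t < S k]).
move=> /(_ (ex_intro _ k hk)) h; exact: rcond_uniq h hk.
Qed.

Lemma nrings_spec S t : rcond S t (nrings S t) \/
  (nrings S t = 0%N /\ forall j, ~ rcond S t j).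
Proof.
case: (pselect (exists k, rcond S t k)) => [[k hk]|H].
  by left; rewrite (nrings_cond hk).
right; split => [|j hj]; last by apply: H; exists j.
rewrite /nrings; apply: xgetPN => k hk; apply: H; by exists k.
Qed.

Lemma nrings_le S t K : t < S K -> (nrings S t <= K)%N.
Proof.
move=> hK; case: (nrings_spec S t) => [[h1 h2]|[-> _]] //.
rewrite leqNgt; apply/negP => lt; have := h1 _ lt; by rewrite leNgt hK.
Qed.

Lemma eta_loc om a b t y : a y = b y -> Defs.eta om a t y = Defs.eta om b t y.
Proof. by rewrite /Defs.eta => h; case: (nrings (edge_ring om y) t). Qed.

Lemma walk_pos_bound om a k : - (k%:Z) <= walk_pos om a k <= k%:Z.
Proof.
elim: k => [|k IH] //=.
case/andP: IH => h1 h2.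
by repeat case: ifP => _; apply/andP; split; lia.
Qed.

Lemma walk_pos_loc om a b L k : agree L a b -> (k <= L)%N ->
  walk_pos om a k = walk_pos om b k.
Proof.
move=> hab; elim: k => [|k IH] // kL /=.
rewrite IH; last by apply: ltnW.
have /andP[h1 h2] := walk_pos_bound om b k.
set x := walk_pos om b k.
rewrite (@eta_loc om a b _ x); last by apply: hab; rewrite /x; lia.
rewrite (@eta_loc om a b _ (x - 1)) //; apply: hab; rewrite /x; lia.
Qed.

Lemma env_loc om a b t L n M : agree L a b -> (nrings (walk_ring om) t <= n)%N ->
  (n + M <= L)%N -> agree M (env_process om a t) (env_process om b t).
Proof.
move=> hab hn hL x h1 h2; rewrite /env_process /walker.
have e : walk_pos om a (nrings (walk_ring om) t) = walk_pos om b (nrings (walk_ring om) t).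
  by apply: (walk_pos_loc _ hab); lia.
rewrite e; apply: eta_loc; apply: hab;
  have /andP[w1 w2] := walk_pos_bound om b (nrings (walk_ring om) t); lia.
Qed.

Lemma env_init om a t M : t < om (WalkTime 0) ->
  (forall x : int, - (M%:Z) <= x -> x < M%:Z -> t < om (EdgeTime x 0)) ->
  agree M (env_process om a t) a.
Proof.
move=> hw he x h1 h2; rewrite /env_process /walker.
have -> : nrings (walk_ring om) t = 0%N.
  by apply: nrings_cond; split; [by [] | rewrite /walk_ring big_ord1].
rewrite /= add0r /Defs.eta.
have -> : nrings (edge_ring om x) t = 0%N.
  by apply: nrings_cond; split; [by [] | rewrite /edge_ring big_ord1; apply: he].
by [].
Qed.

End Dyn.

Section Meas.
Variables (R : realType) (dT : measure_display) (T : measurableType dT).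
Variable Y : clock_index -> T -> R.
Hypothesis mY : forall i, measurable_fun [set: T] (Y i).
Let om (w : T) : sample R := fun i => Y i w.

Definition mdisc {A : eqType} (u : T -> A) :=
  forall y, measurable_fun [set: T] (fun w => u w == y).

Lemma mb_set (b : T -> bool) : measurable_fun [set: T] b -> measurable [set w | b w].
Proof.
move=> mb; have := mb measurableT [set true] I; rewrite setTI.
by congr measurable; apply/seteqP; split => w /=.
Qed.

Lemma mb_of_set (b : T -> bool) : measurable [set w | b w] -> measurable_fun [set: T] b.
Proof.
move=> h; apply: (measurable_fun_bool true); rewrite setTI.
by move: h; congr measurable; apply/seteqP; split => w /=.
Qed.

Lemma mdisc_cst {A : eqType} (y0 : A) : mdisc (fun _ => y0).
Proof. by move=> y; exact: measurable_cst. Qed.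

Lemma mdisc_if {A : eqType} (b : T -> bool) (u v : T -> A) :
  measurable_fun [set: T] b -> mdisc u -> mdisc v ->
  mdisc (fun w => if b w then u w else v w).
Proof.
move=> mb mu mv y.
rewrite (_ : (fun w => _ == y) = fun w => if b w then u w == y else v w == y).
  exact: measurable_fun_ifT.
by apply/funext => w; case: (b w).
Qed.

Lemma mdisc_bool (b : T -> bool) : measurable_fun [set: T] b -> mdisc b.
Proof.
move=> mb y; rewrite (_ : (fun w => _ == y) = fun w => if y then b w else ~~ b w).
  by case: y => //; exact: measurable_neg.
by apply/funext => w; case: y; case: (b w).
Qed.

Lemma mdisc_boolE (b : T -> bool) : mdisc b -> measurable_fun [set: T] b.
Proof.
move=> mb; rewrite (_ : b = fun w => b w == true); first exact: mb.
by apply/funext => w; case: (b w).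
Qed.

Lemma mdisc_comp_nat {A : eqType} (n : T -> nat) (u : nat -> T -> A) :
  mdisc n -> (forall k, mdisc (u k)) -> mdisc (fun w => u (n w) w).
Proof.
move=> mn mu y; apply: mb_of_set.
rewrite (_ : [set w | _] = \bigcup_k ([set w | n w == k] `&` [set w | u k w == y])).
  apply: bigcupT_measurable => k; apply: measurableI; apply: mb_set; [exact: mn|exact: mu].
apply/seteqP; split => w /=.
  by move=> h; exists (n w) => //=; split.
by move=> [k _ [/eqP <-]].
Qed.

Lemma mdisc_comp_int {A : eqType} (n : T -> int) (u : int -> T -> A) :
  mdisc n -> (forall k, mdisc (u k)) -> mdisc (fun w => u (n w) w).
Proof.
move=> mn mu y; apply: mb_of_set.
rewrite (_ : [set w | _] =
   (\bigcup_k ([set w | n w == Posz k] `&` [set w | u (Posz k) w == y])) `|`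
   (\bigcup_k ([set w | n w == Negz k] `&` [set w | u (Negz k) w == y]))).
  apply: measurableU; apply: bigcupT_measurable => k; apply: measurableI;
    apply: mb_set; [exact: mn|exact: mu|exact: mn|exact: mu].
apply/seteqP; split => w /=.
  move=> h; case E : (n w) => [k|k]; [left|right]; exists k => //=; rewrite -E; split => //; by rewrite E.
by case=> -[k _ [/eqP <-]].
Qed.

Section Nrings.
Variables (S : nat -> T -> R) (tau : T -> R).
Hypotheses (mS : forall j, measurable_fun [set: T] (S j))
  (mtau : measurable_fun [set: T] tau).

Lemma m_le (f g : T -> R) : measurable_fun [set: T] f -> measurable_fun [set: T] g ->
  measurable [set w | f w <= g w].
Proof. by move=> mf mg; apply: mb_set; exact: measurable_fun_ler. Qed.

Lemma m_lt (f g : T -> R) : measurable_fun [set: T] f -> measurable_fun [set: T] g ->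
  measurable [set w | f w < g w].
Proof. by move=> mf mg; apply: mb_set; exact: measurable_fun_ltr. Qed.

Lemma m_prefix k : measurable [set w | forall j, (j < k)%N -> S j w <= tau w].
Proof.
elim: k => [|k IH].
  by rewrite (_ : [set w | _] = setT) //; apply/seteqP; split => w //=.
rewrite (_ : [set w | _] = [set w | forall j, (j < k)%N -> S j w <= tau w] `&`
   [set w | S k w <= tau w]).
  by apply: measurableI => //; exact: m_le.
apply/seteqP; split => w /=.
  by move=> h; split; [move=> j jk; apply: h; exact: ltnW|apply: h].
move=> [h1 h2] j; rewrite ltnS leq_eqVlt => /orP[/eqP ->//|]; exact: h1.
Qed.

Lemma m_rcond k : measurable [set w | rcond (fun j => S j w) (tau w) k].
Proof.
rewrite (_ : [set w | _] = [set w | forall j, (j < k)%N -> S j w <= tau w] `&`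
   [set w | tau w < S k w]) //.
by apply: measurableI; [exact: m_prefix|exact: m_lt].
Qed.

Lemma mdisc_nrings : mdisc (fun w => nrings (fun j => S j w) (tau w)).
Proof.
move=> k; apply: mb_of_set.
rewrite (_ : [set w | _] = [set w | rcond (fun j => S j w) (tau w) k] `|`
   ([set w | k = 0%N] `&` ~` \bigcup_j [set w | rcond (fun j => S j w) (tau w) j])).
  apply: measurableU; first exact: m_rcond.
  apply: measurableI.
    by case: k => [|k]; [rewrite (_ : [set w | _] = setT)|rewrite (_ : [set w | _] = set0)];
      try (apply/seteqP; split => w //=).
  apply: measurableC; apply: bigcupT_measurable => j; exact: m_rcond.
apply/seteqP; split => w /=.
  move=> /eqP <-; case: (nrings_spec (fun j => S j w) (tau w)) => [h|[h1 h2]].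
    by left.
  by right; split => //; move=> [j _ hj]; exact: (h2 j).
case=> [h|[k0 h]]; first by rewrite (nrings_cond h).
subst k; case: (nrings_spec (fun j => S j w) (tau w)) => [h'|[-> _]] //.
by exfalso; apply: h; exists (nrings (fun j => S j w) (tau w)).
Qed.

End Nrings.

Lemma m_edge_ring x k : measurable_fun [set: T] (fun w => edge_ring (om w) x k).
Proof. by rewrite /edge_ring; apply: measurable_sum => j; exact: mY. Qed.

Lemma m_walk_ring k : measurable_fun [set: T] (fun w => walk_ring (om w) k).
Proof. by rewrite /walk_ring; apply: measurable_sum => j; exact: mY. Qed.

Lemma mdisc_eta (a : config) (tau : T -> R) x : measurable_fun [set: T] tau ->
  mdisc (fun w => Defs.eta (om w) a (tau w) x).
Proof.
move=> mtau.
pose u (k : nat) (w : T) := match k with 0%N => a x | k'.+1 => Y (EdgeMark x k') w == 1 end.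
have -> : (fun w => Defs.eta (om w) a (tau w) x) =
   (fun w => u (nrings (fun j => edge_ring (om w) x j) (tau w)) w) by [].
apply: mdisc_comp_nat.
  apply: mdisc_nrings => // j; exact: m_edge_ring.
case=> [|k] /=; first exact: mdisc_cst.
apply: mdisc_bool; apply: measurable_fun_eqr => //; exact: mY.
Qed.

Lemma mdisc_walk_pos (a : config) k : mdisc (fun w => walk_pos (om w) a k).
Proof.
elim: k => [|k IH]; first exact: mdisc_cst.
pose u (z : int) (w : T) :=
  let env := Defs.eta (om w) a (walk_ring (om w) k) in
  if Y (WalkDir k) w == 1 then (if env z then z + 1 else z)
  else (if env (z - 1) then z - 1 else z).
have -> : (fun w => walk_pos (om w) a k.+1) = (fun w => u (walk_pos (om w) a k) w) by [].
apply: mdisc_comp_int => // z.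
apply: mdisc_if; first by apply: measurable_fun_eqr => //; exact: mY.
  apply: mdisc_if; [apply: mdisc_boolE; apply: mdisc_eta; exact: m_walk_ring
                   |exact: mdisc_cst|exact: mdisc_cst].
apply: mdisc_if; [apply: mdisc_boolE; apply: mdisc_eta; exact: m_walk_ring
                 |exact: mdisc_cst|exact: mdisc_cst].
Qed.

Lemma m_env (a : config) (t : R) x :
  measurable_fun [set: T] (fun w => env_process (om w) a t x).
Proof.
apply: mdisc_boolE.
have -> : (fun w => env_process (om w) a t x) =
  (fun w => (fun z w => Defs.eta (om w) a t (z + x)) (walker (om w) a t) w) by [].
apply: (mdisc_comp_int (n := fun w => walker (om w) a t)
   (u := fun z w => Defs.eta (om w) a t (z + x))) => [|z]; last exact: mdisc_eta.
have -> : (fun w => walker (om w) a t) =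
  (fun w => (fun k w => walk_pos (om w) a k) (nrings (fun j => walk_ring (om w) j) t) w) by [].
apply: (mdisc_comp_nat (n := fun w => nrings (fun j => walk_ring (om w) j) t)
   (u := fun k w => walk_pos (om w) a k)) => [|k]; last exact: mdisc_walk_pos.
by apply: mdisc_nrings => // j; exact: m_walk_ring.
Qed.

End Meas.

Section FinDim.
Variables (R : realType) (dT : measure_display) (T : measurableType dT).

Definition upd (c : config) (x : int) (b : bool) : config :=
  fun y => if y == x then b else c y.

Lemma meas_finite (e : T -> config) (L : seq int) (h : config -> R) :
  (forall x, measurable_fun [set: T] (fun w => e w x)) ->
  (forall c c', (forall x, x \in L -> c x = c' x) -> h c = h c') ->
  measurable_fun [set: T] (fun w => h (e w)).
Proof.
move=> me; elim: L h => [|x L IH] h hh.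
  rewrite (_ : (fun w => h (e w)) = fun _ => h (fun _ => false)); first exact: measurable_cst.
  by apply/funext => w; apply: hh.
rewrite (_ : (fun w => h (e w)) = fun w => if e w x then h (upd (e w) x true)
                                             else h (upd (e w) x false)).
  apply: measurable_fun_ifT => //.
    apply: (IH (fun c => h (upd c x true))) => c c' hc; apply: hh => y.
    by rewrite /upd inE; case: eqP => // _ /= /hc.
  apply: (IH (fun c => h (upd c x false))) => c c' hc; apply: hh => y.
  by rewrite /upd inE; case: eqP => // _ /= /hc.
apply/funext => w; case E : (e w x); apply: hh => y _; rewrite /upd;
  by case: eqP => // ->.
Qed.

Definition trunc (N : nat) (c : config) : config :=
  fun y => if (- (N%:Z) <= y) && (y < N%:Z) then c y else false.

Definition wlist (N : nat) : seq int := [seq (i%:Z - N%:Z) | i <- iota 0 (N + N)].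

Lemma in_wlist N y : - (N%:Z) <= y -> y < N%:Z -> y \in wlist N.
Proof.
move=> h1 h2; apply/mapP; exists (absz (y + N%:Z)).
  by rewrite mem_iota; apply/andP; split; lia.
lia.
Qed.

Lemma trunc_agree N c : agree N (trunc N c) c.
Proof. by move=> y h1 h2; rewrite /trunc h1 h2. Qed.

Lemma trunc_dep N c c' : (forall x, x \in wlist N -> c x = c' x) -> trunc N c = trunc N c'.
Proof.
move=> hc; apply/funext => y; rewrite /trunc; case: ifP => // /andP[h1 h2].
by apply: hc; apply: in_wlist.
Qed.

Lemma meas_cont (e : T -> config) (f : config -> R) :
  (forall x, measurable_fun [set: T] (fun w => e w x)) -> d_continuous f ->
  measurable_fun [set: T] (fun w => f (e w)).
Proof.
move=> me fc.
apply: (measurable_fun_cvg (h := fun N w => f (trunc N (e w)))).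
  move=> N; apply: (meas_finite (L := wlist N) (h := fun c => f (trunc N c))) => //.
  by move=> c c' hc; rewrite (trunc_dep hc).
move=> w _; apply/cvgrPdist_lt => eps e0.
have [delta d0 hd] := fc (e w) eps e0.
have [M hM] := delta_nat d0.
exists M => // N /= MN.
rewrite distrC; apply: hd.
apply: (lt_trans _ hM); apply: d_agree.
apply: agree_sym; apply: (agree_mono MN); exact: trunc_agree.
Qed.

End FinDim.

Section IntB.
Variables (R : realType) (dT : measure_display) (T : measurableType dT).
Variable P : probability T R.

Lemma intb (k : T -> R) (C : R) : measurable_fun [set: T] k ->
  (forall w, `|k w| <= C) -> P.-integrable [set: T] (EFin \o k).
Proof.
move=> mk hk; apply: measurable_bounded_integrable => //.
  by have := probability_setT P; rewrite /= => ->; rewrite ltry.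
exists C; split; first by rewrite num_real.
by move=> M hM x _ /=; apply: le_trans (hk x) (ltW hM).
Qed.

Lemma int_close (g h : T -> R) (B a : R) (Bad : set T) :
  measurable_fun [set: T] g -> measurable_fun [set: T] h ->
  (forall w, `|g w| <= B) -> (forall w, `|h w| <= B) -> measurable Bad ->
  (forall w, ~ Bad w -> `|g w - h w| <= a) -> 0 <= a ->
  `|Rintegral P [set: T] g - Rintegral P [set: T] h| <= a + 2 * B * fine (P Bad).
Proof.
move=> mg mh hg hh mB hgh a0.
have ig := intb mg hg; have ih := intb mh hh.
have mgh : measurable_fun [set: T] (fun w => g w - h w) by exact: measurable_funB.
have hgh2 w : `|g w - h w| <= B + B by apply: le_trans (ler_normB _ _) (lerD (hg w) (hh w)).
have igh := intb mgh hgh2.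
have mI : measurable_fun [set: T] (fun w => a + 2 * B * (\1_Bad w : R)).
  apply: measurable_funD => //; apply: measurable_funM => //; exact: measurable_indic.
have hI w : `|a + 2 * B * (\1_Bad w : R)| <= `|a| + `|2 * B|.
  apply: le_trans (ler_normD _ _) _; rewrite lerD2l normrM ler_piMr //.
  by rewrite /indic; case: (w \in Bad); rewrite ?normr1 ?normr0.
have iI := intb mI hI.
rewrite -RintegralB //.
apply: le_trans (le_normr_Rintegral measurableT igh) _.
have iabs : P.-integrable [set: T] (EFin \o (fun w => `|g w - h w|)).
  apply: (intb (C := B + B)) => //; first exact: measurableT_comp.
  by move=> w; rewrite normr_id.
apply: le_trans (le_Rintegral _ iabs iI _) _ => //.
  move=> w _; rewrite /indic; case: (boolP (w \in Bad)) => hw.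
    rewrite mulr1; apply: le_trans (hgh2 w) _.
    by rewrite mulr_natl mulr2n -[X in X <= _](add0r (B + B)) lerD2r.
  rewrite /= mulr0 addr0; apply: hgh; by move/mem_set; apply/negP.
rewrite RintegralD //; last first.
  apply: (intb (C := `|2 * B|)).
    by apply: measurable_funM => //; exact: measurable_indic.
  move=> w; rewrite normrM ler_piMr //.
  by rewrite /indic; case: (w \in Bad); rewrite ?normr1 ?normr0.
  apply: (intb (C := `|a|)) => //.
rewrite Rintegral_cst //; have := probability_setT P; move=> /= ->.
rewrite mulr1 lerD2l RintegralZl //; last first.
  apply: (intb (C := 1)); first exact: measurable_indic.
  by move=> w; rewrite /indic; case: (w \in Bad); rewrite ?normr1 ?normr0.
rewrite /Rintegral integral_indic // setIT.
by [].
Qed.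

End IntB.

Section ProbB.
Variables (R : realType) (dT : measure_display) (T : measurableType dT).
Variable P : probability T R.

Lemma fineP_le (A : set T) (c : R) : measurable A -> (P A <= c%:E)%E -> fine (P A) <= c.
Proof. by move=> mA h; rewrite -lee_fin fineK //; exact: fin_num_measure. Qed.

Lemma measure_bigU (I : Type) (s : seq I) (F : I -> set T) :
  (forall i, measurable (F i)) ->
  (P (\big[setU/set0]_(i <- s) F i) <= \sum_(i <- s) P (F i))%E.
Proof.
move=> mF; elim: s => [|i s IH]; first by rewrite !big_nil measure0.
rewrite !big_cons; apply: le_trans (measureU2 _ _ _) _ => //.
  by apply: bigsetU_measurable.
exact: leeD.
Qed.

Lemma in_bigI (I : eqType) (s : seq I) (F : I -> set T) w :
  (\big[setI/setT]_(i <- s) F i) w <-> (forall i, i \in s -> F i w).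
Proof.
elim: s => [|i s IH]; first by rewrite big_nil; split.
rewrite big_cons; split.
  by move=> [h1 /IH h2] j; rewrite in_cons => /orP[/eqP ->//|]; exact: h2.
move=> h; split; first by apply: h; rewrite in_cons eqxx.
by apply/IH => j hj; apply: h; rewrite in_cons hj orbT.
Qed.

Lemma in_bigU (I : eqType) (s : seq I) (F : I -> set T) w :
  (\big[setU/set0]_(i <- s) F i) w <-> (exists i, i \in s /\ F i w).
Proof.
elim: s => [|i s IH]; first by rewrite big_nil; split => // -[i []].
rewrite big_cons; split.
  case=> [h|/IH [j [h1 h2]]]; first by exists i; rewrite in_cons eqxx.
  by exists j; rewrite in_cons h1 orbT.
move=> [j []]; rewrite in_cons => /orP[/eqP ->|hj] h; first by left.
by right; apply/IH; exists j.
Qed.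

End ProbB.

Lemma sum_cst_seq {R : realType} (I : Type) (s : seq I) (c : R) :
  \sum_(i <- s) c = c *+ size s.
Proof. by elim: s => [|i s IH]; rewrite ?big_nil // big_cons IH mulrS. Qed.

Lemma prod_cst_seq {R : realType} (I : Type) (s : seq I) (c : R) :
  \prod_(i <- s) c = c ^+ size s.
Proof. by elim: s => [|i s IH]; rewrite ?big_nil // big_cons IH exprS. Qed.

Section Main.
Variables (R : realType) (dT : measure_display) (T : measurableType dT).
Variables (P : probability T R) (mu p lam : R) (Y : clock_index -> {RV P >-> R}).
Hypotheses (mu0 : 0 < mu) (HY : rwdp_clocks P mu p lam Y).

Let mY i : measurable_fun [set: T] (Y i) := measurable_funPT (Y i).

Lemma P_le1 i c : P [set w | Y i w <= c] = (clock_cdf mu p lam i c)%:E.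
Proof.
have := HY; rewrite /rwdp_clocks => /(_ [:: i] (fun _ => c) erefl).
by rewrite !big_cons !big_nil setIT mulr1.
Qed.

Lemma m_Yle i c : measurable [set w | Y i w <= c].
Proof. by apply: m_le => //; exact: measurable_cst. Qed.

Lemma m_Ylt i c : measurable [set w | Y i w < c].
Proof. by apply: m_lt => //; exact: measurable_cst. Qed.

Lemma cdf_neg i c : c < 0 -> clock_cdf mu p lam i c = 0.
Proof. by move=> c0; case: i => * /=; rewrite /exp_cdf /bern_cdf c0. Qed.

Lemma exp_cdf_le (r s : R) : 0 <= s -> exp_cdf r s <= r * s.
Proof.
move=> s0; rewrite /exp_cdf ltNge s0 /=.
have := expR_ge1Dx (- (r * s)).
by move=> h; lra.
Qed.

Lemma exp_cdf_ge0 (r s : R) : 0 <= r -> 0 <= exp_cdf r s.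
Proof.
move=> r0; rewrite /exp_cdf; case: ltP => // s0.
by rewrite subr_ge0 expR_le1 oppr_le0 mulr_ge0.
Qed.

Lemma P_neg0 i : P [set w | Y i w < 0] = 0%E.
Proof.
have E : [set w | Y i w < 0] = \bigcup_n [set w | Y i w <= - ((n.+1)%:R)^-1].
  apply/seteqP; split => w /=.
    move=> h; exists (Num.truncn (- Y i w)^-1) => //=.
    have h0 : 0 <= (- Y i w)^-1 by rewrite invr_ge0 oppr_ge0 ltW.
    have /andP[_ h1] := truncn_itv h0.
    rewrite lerNr; apply: ltW; rewrite -invf_plt ?posrE ?oppr_gt0 ?ltr0n //.
  move=> [n _ /= h]; apply: le_lt_trans h _.
  by rewrite oppr_lt0 invr_gt0 ltr0n.
rewrite E; apply/negligibleP; first by apply: bigcupT_measurable => n; exact: m_Yle.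
apply: negligible_bigcup => n; apply/negligibleP; first exact: m_Yle.
apply: (eq_trans (P_le1 i _)).
by rewrite cdf_neg // oppr_lt0 invr_gt0 ltr0n.
Qed.

Lemma meas_g (f : config -> R) (xi : config) (t : R) : d_continuous f ->
  measurable_fun [set: T] (fun w => f (env_process (fun i => Y i w) xi t)).
Proof.
move=> fc; apply: (meas_cont (e := fun w => env_process (fun i => Y i w) xi t)) => // x.
exact: (m_env (Y := fun i w => Y i w)).
Qed.

Lemma Rint_cst (c : R) : Rintegral P [set: T] (fun _ => c) = c.
Proof.
by rewrite Rintegral_cst //; have := probability_setT P; move=> /= ->; rewrite mulr1.
Qed.

Lemma P_le1' i c (d : R) : clock_cdf mu p lam i c <= d ->
  (P [set w | (Y i w <= c)%R] <= d%:E)%E.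
Proof. by move=> h; rewrite P_le1 lee_fin. Qed.

Lemma part2 (f : config -> R) (xi : config) : d_continuous f ->
  (fun t => env_semigroup Y t f xi) @ (0:R)^'+ --> f xi.
Proof.
move=> fc; have [B [B0 hB]] := bounded_cont fc.
apply/cvgrPdist_lt => eps e0.
have e2 : 0 < eps / 2 by rewrite divr_gt0.
have [M hM] := unif_cont fc e2.
pose n := size (wlist M).
pose A := 1 + n%:R * mu.
have A0 : 0 < A by rewrite /A ltr_pwDl // mulr_ge0 // ltW.
pose C := (2 * B + 1) * A.
have C0 : 0 < C by rewrite /C mulr_gt0 // ltr_pwDr // mulr_ge0.
pose delta := eps / 2 / C.
have d0 : 0 < delta by rewrite divr_gt0.
near=> t.
have t0 : 0 < t by near: t; exact: nbhs_right_gt.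
have td : t < delta by near: t; exact: nbhs_right_lt.
pose Bad := [set w | Y (WalkTime 0) w <= t] `|`
   \big[setU/set0]_(x <- wlist M) [set w | Y (EdgeTime x 0) w <= t].
have mBU : measurable (\big[setU/set0]_(x <- wlist M) [set w | Y (EdgeTime x 0) w <= t]).
  by apply: bigsetU_measurable => x _; exact: m_Yle.
have mBad : measurable Bad by apply: measurableU => //; exact: m_Yle.
have hout w : ~ Bad w -> `|f (env_process (fun i => Y i w) xi t) - f xi| <= eps / 2.
  move=> hw; apply: ltW; apply: hM; apply: env_init.
    by rewrite ltNge; apply/negP => h; apply: hw; left.
  move=> x h1 h2; rewrite ltNge; apply/negP => h; apply: hw; right.
  by apply/in_bigU; exists x; split => //; exact: in_wlist.
have hPB : fine (P Bad) <= t * A.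
  apply: fineP_le => //.
  apply: le_trans (measureU2 _ _ _) _ => //; first exact: m_Yle.
  rewrite /A mulrDr mulr1 EFinD; apply: leeD.
    apply: P_le1' => /=; apply: le_trans (exp_cdf_le _ (ltW t0)) _; by rewrite mul1r.
  apply: le_trans (measure_bigU _ _ _) _; first by move=> x; exact: m_Yle.
  apply: (@le_trans _ _ (\sum_(x <- wlist M) (mu * t)%:E)).
    apply: lee_sum => x _; apply: P_le1' => /=; exact: exp_cdf_le (ltW t0).
  rewrite sumEFin sum_cst_seq lee_fin -/n -mulr_natl.
  by rewrite (_ : t * _ = n%:R * (mu * t)) ?mulr_natl //; ring.
rewrite distrC.
change (`|Rintegral P [set: T] (fun w => f (env_process (fun i => Y i w) xi t)) - f xi| < eps).
rewrite -[X in _ - X](Rint_cst (f xi)).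
have key := int_close P (meas_g xi t fc) (measurable_cst (f xi)) (fun w => hB _) (fun _ => hB xi) mBad hout (ltW e2).
apply: le_lt_trans key _.
rewrite {2}(splitr eps) ltrD2l.
have h1 : 2 * B * fine (P Bad) <= 2 * B * (t * A) by rewrite ler_wpM2l // mulr_ge0.
apply: le_lt_trans h1 _.
have h2 : 2 * B * (t * A) <= (2 * B + 1) * (t * A).
  by rewrite ler_wpM2r ?lerDl // mulr_ge0 // ltW.
apply: le_lt_trans h2 _.
have -> : eps / 2 = (2 * B + 1) * (delta * A).
  rewrite /delta /C; field.
  by rewrite gt_eqF //= gt_eqF // ltr_pwDr // mulr_ge0.
rewrite ltr_pM2l ?ltr_pM2r //; last by rewrite ltr_pwDr // mulr_ge0.
Unshelve. all: by end_near.
Qed.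

Lemma le_eqE (x y z : \bar R) : x = y -> (y <= z)%E -> (x <= z)%E.
Proof. by move=> ->. Qed.

Lemma P_bigI (s : seq clock_index) (c : clock_index -> R) : uniq s ->
  P (\big[setI/setT]_(i <- s) [set w | Y i w <= c i]) =
  ((\prod_(i <- s) clock_cdf mu p lam i (c i))%R)%:E.
Proof. by move=> us; have := HY; rewrite /rwdp_clocks => /(_ s c us). Qed.

Lemma part1 (f : config -> R) (t : R) : d_continuous f -> 0 <= t ->
  d_continuous (env_semigroup Y t f).
Proof.
move=> fc t0 xi eps e0.
have [B [B0 hB]] := bounded_cont fc.
have e2 : 0 < eps / 2 by rewrite divr_gt0.
have [M hM] := unif_cont fc e2.
pose q := exp_cdf 1 t.
have q0 : 0 <= q by apply: exp_cdf_ge0.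
have q1 : q < 1.
  rewrite /q /exp_cdf (ltNge t 0) t0 /=; have := expR_gt0 (- (1 * t)); lra.
pose et := eps / 2 / (2 * B + 1).
have B1 : 0 < 2 * B + 1 by rewrite ltr_pwDr // mulr_ge0.
have et0 : 0 < et by rewrite divr_gt0.
have [K hK] : exists K, q ^+ K.+1 < et.
  have hq : `|q| < 1 by rewrite ger0_norm.
  have := cvg_expr hq; move/cvgrPdist_lt/(_ _ et0) => [N _ hN].
  exists N; have := hN N.+1 (leqnSn N).
  by rewrite /= sub0r normrN ger0_norm // exprn_ge0.
pose L := (K + M)%N.
exists ((L.+1)%:R^-1); first by rewrite invr_gt0 ltr0n.
move=> xi' hd; have hag := agree_d hd.
pose s := [seq WalkTime j | j <- iota 0 K.+1].
pose Bad := \big[setI/setT]_(i <- s) [set w | Y i w <= t] `|`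
            \big[setU/set0]_(i <- s) [set w | Y i w < 0].
have mB1 : measurable (\big[setI/setT]_(i <- s) [set w | Y i w <= t]).
  by apply: bigsetI_measurable => i _; exact: m_Yle.
have mB2 : measurable (\big[setU/set0]_(i <- s) [set w | Y i w < 0]).
  by apply: bigsetU_measurable => i _; exact: m_Ylt.
have mBad : measurable Bad by exact: measurableU.
have hout w : ~ Bad w -> `|f (env_process (fun i => Y i w) xi' t) -
                            f (env_process (fun i => Y i w) xi t)| <= eps / 2.
  move=> hw.
  have pos j : (j < K.+1)%N -> 0 <= Y (WalkTime j) w.
    move=> hj; rewrite leNgt; apply/negP => h; apply: hw; right.
    apply/in_bigU; exists (WalkTime j); split => //.
    by apply/mapP; exists j => //; rewrite mem_iota.
  have tl : t < walk_ring (fun i => Y i w) K.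
    rewrite ltNge; apply/negP => h; apply: hw; left; apply/in_bigI => i /mapP [j hj ->] /=.
    move: hj; rewrite mem_iota add0n => /andP[_ hj].
    apply: le_trans h; rewrite /walk_ring (bigD1 (Ordinal hj)) //= lerDl.
    by apply: sumr_ge0 => k _; apply: pos.
  have hn := nrings_le tl.
  apply: ltW; apply: hM.
  by apply: (env_loc (agree_sym hag) hn); rewrite /L.
have hPB : fine (P Bad) <= q ^+ K.+1.
  apply: fineP_le => //.
  apply: le_trans (measureU2 _ _ _) _ => //.
  rewrite -[X in (_ <= X)%E]adde0; apply: leeD.
    have us : uniq s by rewrite map_inj_uniq ?iota_uniq // => a b [].
    apply: (le_eqE (P_bigI (fun _ => t) us)).
    rewrite big_map lee_fin.
    by rewrite (eq_bigr (fun _ => q)) // prod_cst_seq size_iota.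
  have := measure_bigU P s (fun i => m_Ylt i 0).
  move=> h; apply: (le_trans h).
  by rewrite big1 // => i _; exact: P_neg0.
have key := int_close P (meas_g xi' t fc) (meas_g xi t fc) (fun w => hB _) (fun w => hB _)
  mBad hout (ltW e2).
apply: le_lt_trans key _.
rewrite {2}(splitr eps) ltrD2l.
have h1 : 2 * B * fine (P Bad) <= 2 * B * q ^+ K.+1 by rewrite ler_wpM2l // mulr_ge0.
apply: le_lt_trans h1 _.
have h2 : 2 * B * q ^+ K.+1 <= (2 * B + 1) * q ^+ K.+1.
  by rewrite ler_wpM2r ?lerDl // exprn_ge0.
apply: le_lt_trans h2 _.
have -> : eps / 2 = (2 * B + 1) * et by rewrite /et; field; rewrite gt_eqF.
by rewrite ltr_pM2l.
Qed.

End Main.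

Unset Implicit Arguments.

Theorem lemma3p2 (R : realType) (dT : measure_display) (T : measurableType dT)
    (P : probability T R) (mu p lam : R)
    (Y : clock_index -> {RV P >-> R}) :
  0 < mu -> 0 < p < 1 -> 0 < lam ->
  rwdp_clocks P mu p lam Y ->
  feller Y.
Proof.
move=> mu0 _ _ HY f fc; split.
  by move=> t t0; exact: (part1 HY fc t0).
by move=> xi; exact: (part2 (xi := xi) mu0 HY fc).
Qed.
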